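(* Let $(\Xi,\mathcal{F},P)$ be a probability space and $\{y_t\}_{t\in\mathbb{Z}}$ a real, mean-zero, covariance-stationary series on it; put $\mathcal{F}_t=\sigma(y_s,\,s\le t)$. Assume (D1) $P\{y_1^2>0\}=1$; (D2) $y_t=\sum_{s=0}^{\infty}\kappa_s\epsilon_{t-s}$ with $\kappa_0=1$, $\sum_s|\kappa_s|<\infty$, $\kappa(z)=\sum_s\kappa_s z^s\neq 0$ for $|z|\le 1$, where $\{\epsilon_t\}$ is a martingale difference sequence with respect to $\{\mathcal{F}_t\}$; (D3) $E[\epsilon_t^2\mid\mathcal{F}_{t-1}]=\sigma_\epsilon^2$ a.s. (constant); (D4) $\sup_t|\epsilon_t|\le K<\infty$ a.s. Fix $\beta\in[0,1]$, let $\theta_t$ be generated by the recursive algorithm in the context, and assume there are random variables $k^*$ (integer, $0\le k^*<\infty$) and $K^*\in(0,1)$ such that a.s. $|\theta_{t+k^*}|\le K^*$ for all $t\ge1$. Then for each integer $u\ge0$ and each (possibly random) integer $0\le k^*<\infty$, $$\frac{\sigma_\epsilon^2}{t}\sum_{s=1}^t\sum_{j=0}^u\big(\kappa_j^\phi(s)\big)^2=\frac{\sigma_\epsilon^2}{t}\sum_{s=1}^t\sum_{j=0}^u\Big(\sum_{l=0}^j(-\theta_{s+k^*})^l\sum_{p=0}^{j-l}(-\beta\theta_{s+k^*})^p\kappa_{j-l-p}\Big)^2+o_{a.s.}(1).$$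
   Context: Recursive algorithm: set $\theta_1=0$, $\bar P_1=0$, $e_1=y_1$, $x_1=y_1$, $\phi_1=x_1$, and for $t\ge2$: $x_t=y_t-\beta\theta_{t-1}x_{t-1}$; $e_t=y_t-\theta_{t-1}e_{t-1}$; $\phi_t=x_t-\theta_{t-1}\phi_{t-1}$; $\bar P_t=\frac1t\sum_{s=1}^{t-1}\phi_s^2$; $\theta_t=\theta_{t-1}+\bar P_t^{-1}\frac1t\phi_{t-1}e_t$. Coefficients: for $t\ge1$, $j\ge0$ (empty products equal 1), $\kappa_j^x(t)=\sum_{l=0}^{\min(j,t-1)}(-\beta)^l\kappa_{j-l}\prod_{i=1}^l\theta_{t-i}$; $\kappa_j^\phi(1)=\kappa_j$ and $\kappa_j^\phi(t)=\kappa_j^x(t)-\theta_{t-1}\kappa_{j-1}^\phi(t-1)$ for $t\ge2$, with $\kappa_{-1}^\phi(\cdot):=0$; these are the coefficients in $\phi_t=\sum_{j\ge0}\kappa_j^\phi(t)\epsilon_{t-j}$. The notation $o_{a.s.}(1)$ denotes a term converging to $0$ almost surely as $t\to\infty$. *)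

(* Defs.v *)
From HB Require Import structures.
From mathcomp Require Import all_boot all_order all_algebra.
From mathcomp Require Import all_classical all_reals all_analysis.
From mathcomp Require Import complex.
Set Implicit Arguments. Unset Strict Implicit. Unset Printing Implicit Defensive.
Import Order.TTheory GRing.Theory Num.Theory.
Import numFieldNormedType.Exports.
Local Open Scope classical_set_scope.
Local Open Scope ring_scope.

Section Defs.
Variable R : realType.

Record algo_state := AlgoState {
  st_theta : R; st_e : R; st_x : R; st_phi : R; st_S : R }.

(* algo y beta n = state at time t = n+1 *)
Fixpoint algo (y : nat -> R) (beta : R) (n : nat) : algo_state :=
  match n with
  | 0 => AlgoState 0 (y 1%N) (y 1%N) (y 1%N) (y 1%N ^+ 2)
  | n'.+1 =>
      let st := algo y beta n' in
      let t := n'.+2 in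
      let th := st_theta st in
      let x := y t - beta * th * st_x st in
      let e := y t - th * st_e st in
      let phi := x - th * st_phi st in
      let Pbar := (t%:R)^-1 * st_S st in
      let th' := th + Pbar^-1 * (t%:R)^-1 * st_phi st * e in
      AlgoState th' e x phi (st_S st + phi ^+ 2)
  end.

(* theta_t for t >= 1 (theta 0 is an unused dummy value = theta_1 = 0) *)
Definition theta (y : nat -> R) (beta : R) (t : nat) : R :=
  st_theta (algo y beta t.-1).

Definition kappa_x (th : nat -> R) (kappa : nat -> R) (beta : R)
    (t j : nat) : R :=
  \sum_(0 <= l < (minn j t.-1).+1)
     (- beta) ^+ l * kappa (j - l)%N * \prod_(1 <= i < l.+1) th (t - i)%N.

(* kappa_phi_aux n j = kappa^phi_j(n+1) *)
Fixpoint kappa_phi_aux (th : nat -> R) (kappa : nat -> R) (beta : R)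
    (n j : nat) : R :=
  match n with
  | 0 => kappa j
  | n'.+1 => kappa_x th kappa beta n'.+2 j
             - th n'.+1 * (if j is j'.+1 then kappa_phi_aux th kappa beta n' j'
                           else 0)
  end.

Definition kappa_phi th kappa beta (t j : nat) : R :=
  kappa_phi_aux th kappa beta t.-1 j.

Definition kappa_lim (kappa : nat -> R) (beta th : R) (j : nat) : R :=
  \sum_(0 <= l < j.+1) (- th) ^+ l *
     \sum_(0 <= p < (j - l).+1) (- (beta * th)) ^+ p * kappa (j - l - p)%N.

End Defs.

Section Prob.
Context {d : measure_display} {Omega : measurableType d} {R : realType}.

Definition natfilt (y : int -> Omega -> R) (t : int) : set (set Omega) :=
  <<s [set: Omega],
      [set A | exists s : int, exists B : set R,
                 (s <= t)%R /\ measurable B /\ A = y s @^-1` B] >>.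

End Prob.

(* Main.v *)
Require Import Defs.
From HB Require Import structures.
From mathcomp Require Import all_boot all_order all_algebra.
From mathcomp Require Import all_classical all_reals all_analysis.
From mathcomp Require Import complex.
From mathcomp Require Import lra ring zify measurable_realfun.
Import Order.TTheory GRing.Theory Num.Theory.
Import numFieldNormedType.Exports.
Local Open Scope classical_set_scope.
Local Open Scope ring_scope.

Module Helpers.
Set Implicit Arguments. Unset Strict Implicit. Unset Printing Implicit Defensive.

Section Van.
Variable R : realType.
Implicit Types u v : nat -> R.

Definition vanish u := forall e : R, 0 < e -> exists N, forall n, (N <= n)%N -> `|u n| <= e.
Definition ebounded u := exists M : R, exists N, forall n, (N <= n)%N -> `|u n| <= M.

Lemma vanish0 : vanish (fun _ => 0).
Proof. by move=> e e0; exists 0%N => n _; rewrite normr0 ltW. Qed.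

Lemma vanish_ev u v : vanish u -> (exists N, forall n, (N <= n)%N -> v n = u n) -> vanish v.
Proof.
move=> hu [N hN] e e0; have [N1 h1] := hu e e0; exists (maxn N N1) => n.
rewrite geq_max => /andP[a b]; rewrite hN //; exact: h1.
Qed.

Lemma vanishD u v : vanish u -> vanish v -> vanish (fun n => u n + v n).
Proof.
move=> hu hv e e0; have e20 : 0 < e / 2 by rewrite divr_gt0.
have [N1 h1] := hu _ e20; have [N2 h2] := hv _ e20; exists (maxn N1 N2) => n.
rewrite geq_max => /andP[a b]; apply: (le_trans (ler_normD _ _)).
have := h1 _ a; have := h2 _ b; lra.
Qed.

Lemma vanishN u : vanish u -> vanish (fun n => - u n).
Proof. by move=> hu e e0; have [N h] := hu e e0; exists N => n /h; rewrite normrN. Qed.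

Lemma vanishB u v : vanish u -> vanish v -> vanish (fun n => u n - v n).
Proof. by move=> hu hv; apply: vanishD => //; exact: vanishN. Qed.

Lemma vanish_ebounded u : vanish u -> ebounded u.
Proof. by move=> hu; have [N h] := hu 1 ltr01; exists 1, N. Qed.

Lemma vanishMb u v : vanish u -> ebounded v -> vanish (fun n => u n * v n).
Proof.
move=> hu [M [N hN]] e e0.
have M0 : 0 < `|M| + 1 by rewrite ltr_pwDr // normr_ge0.
have [N1 h1] := hu (e / (`|M| + 1)) (divr_gt0 e0 M0).
exists (maxn N N1) => n; rewrite geq_max => /andP[a b].
rewrite normrM; have h1n := h1 _ b; have hNn := hN _ a.
have hM : `|v n| <= `|M| + 1 by apply: (le_trans hNn); rewrite (le_trans (ler_norm _)) // lerDl.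
apply: (le_trans (ler_pM (normr_ge0 _) (normr_ge0 _) h1n hM)).
by rewrite mulfVK // gt_eqF.
Qed.

Lemma vanishbM u v : ebounded v -> vanish u -> vanish (fun n => v n * u n).
Proof. by move=> hv hu; under [fun n => _]funext do rewrite mulrC; exact: vanishMb. Qed.

Lemma ebounded_cst (c : R) : ebounded (fun _ => c).
Proof. by exists `|c|, 0%N. Qed.

Lemma eboundedD u v : ebounded u -> ebounded v -> ebounded (fun n => u n + v n).
Proof.
move=> [M1 [N1 h1]] [M2 [N2 h2]]; exists (M1 + M2), (maxn N1 N2) => n.
rewrite geq_max => /andP[a b]; apply: (le_trans (ler_normD _ _)); exact: lerD (h1 _ a) (h2 _ b).
Qed.

Lemma eboundedM u v : ebounded u -> ebounded v -> ebounded (fun n => u n * v n).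
Proof.
move=> [M1 [N1 h1]] [M2 [N2 h2]]; exists (M1 * M2), (maxn N1 N2) => n.
rewrite geq_max => /andP[a b]; rewrite normrM; exact: ler_pM (h1 _ a) (h2 _ b).
Qed.

Lemma eboundedN u : ebounded u -> ebounded (fun n => - u n).
Proof. by move=> [M [N h]]; exists M, N => n /h; rewrite normrN. Qed.

Lemma eboundedX u k : ebounded u -> ebounded (fun n => u n ^+ k).
Proof.
move=> hu; elim: k => [|k IH]; first exact: ebounded_cst.
by under [fun n => _]funext do rewrite exprS; exact: eboundedM.
Qed.

Lemma ebounded_sum (I : Type) (r : seq I) (P : pred I) (F : I -> nat -> R) :
  (forall i, ebounded (F i)) -> ebounded (fun n => \sum_(i <- r | P i) F i n).
Proof.
move=> hF; elim: r => [|x r IH].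
  by under [fun n => _]funext do rewrite big_nil; exact: ebounded_cst.
under [fun n => _]funext do rewrite big_cons.
case: (P x); last by [].
exact: eboundedD.
Qed.

Lemma vanish_sum (I : Type) (r : seq I) (P : pred I) (F : I -> nat -> R) :
  (forall i, vanish (F i)) -> vanish (fun n => \sum_(i <- r | P i) F i n).
Proof.
move=> hF; elim: r => [|x r IH].
  by under [fun n => _]funext do rewrite big_nil; exact: vanish0.
under [fun n => _]funext do rewrite big_cons.
case: (P x); last by [].
exact: vanishD.
Qed.

Lemma vanish_shift u a : vanish u -> vanish (fun n => u (n + a)%N).
Proof.
move=> hu e e0; have [N h] := hu e e0; exists N => n hn; apply: h.
exact: leq_trans hn (leq_addr _ _).
Qed.

Lemma vanish_unshift u a : vanish (fun n => u (n + a)%N) -> vanish u.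
Proof.
move=> hu e e0; have [N h] := hu e e0; exists (N + a)%N => n hn.
have := h (n - a)%N; rewrite subnK; last exact: leq_trans (leq_addl _ _) hn.
by apply; rewrite leq_subRL ?(leq_trans (leq_addl _ _) hn) // addnC.
Qed.

Lemma vanish_subn u c : vanish u -> vanish (fun n => u (n - c)%N).
Proof.
move=> hu e e0; have [N h] := hu e e0; exists (N + c)%N => n hn; apply: h.
by rewrite leq_subRL ?(leq_trans (leq_addl _ _) hn) // addnC.
Qed.

Lemma ebounded_shift u a : ebounded u -> ebounded (fun n => u (n + a)%N).
Proof.
move=> [M [N h]]; exists M, N => n hn; apply: h.
exact: leq_trans hn (leq_addr _ _).
Qed.

Lemma ebounded_subn u c : ebounded u -> ebounded (fun n => u (n - c)%N).
Proof.
move=> [M [N h]]; exists M, (N + c)%N => n hn; apply: h.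
by rewrite leq_subRL ?(leq_trans (leq_addl _ _) hn) // addnC.
Qed.

Lemma vanish_cvg u : vanish u -> u @ \oo --> 0.
Proof.
move=> hu; apply/cvgr0Pnorm_le => e e0; have [N h] := hu e e0.
by exists N => // n /= hn; exact: h.
Qed.

Lemma vanish_cesaro u : vanish u ->
  vanish (fun t => t%:R^-1 * \sum_(1 <= s < t.+1) u s).
Proof.
move=> hu e e0; have e20 : 0 < e / 2 by rewrite divr_gt0.
have [N h] := hu _ e20.
pose C := \sum_(1 <= s < N.+1) `|u s|.
have C0 : 0 <= C by apply: sumr_ge0 => *; exact: normr_ge0.
have [N2 hN2] : exists N2 : nat, C / (e / 2) < N2%:R.
  by exists (Num.truncn (C / (e/2))).+1; rewrite Num.Theory.truncnS_gt.
exists (maxn N.+1 N2.+1) => t; rewrite geq_max => /andP[a b].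
have t0 : (0 < t)%N by exact: leq_trans a.
have tR : 0 < t%:R :> R by rewrite ltr0n.
rewrite normrM normfV (ger0_norm (ltW tR)).
rewrite (big_cat_nat _ (n := N.+1)) //=; last exact: ltnW.
have h1 : `|\sum_(1 <= i < N.+1) u i| <= C by exact: ler_norm_sum.
have h2 : `|\sum_(N.+1 <= i < t.+1) u i| <= t%:R * (e / 2).
  apply: (le_trans (ler_norm_sum _ _ _)).
  apply: (le_trans (y := \sum_(N.+1 <= i < t.+1) (e / 2))).
    by apply: ler_sum_nat => i /andP[hi _]; apply: h; exact: ltnW.
  have -> : \sum_(N.+1 <= i < t.+1) (e / 2) = (t - N)%:R * (e / 2) by rewrite sumr_const_nat mulr_natl subSS.
  rewrite ler_wpM2r ?ler_nat ?leq_subr //; exact: ltW.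
have hC : C <= t%:R * (e / 2).
  rewrite -ler_pdivrMr //; apply: ltW; apply: (lt_le_trans hN2).
  by rewrite ler_nat; exact: ltnW.
rewrite ler_pdivrMl // ; apply: (le_trans (ler_normD _ _)).
have -> : t%:R * e = t%:R * (e / 2) + t%:R * (e / 2) by rewrite -mulrDr -splitr.
exact: lerD (le_trans h1 hC) h2.
Qed.

End Van.

Section Kap.
Variable R : realType.
Variables (th : nat -> R) (kappa : nat -> R) (beta : R).
Hypothesis hbeta : `|beta| <= 1.
Hypothesis hthb : exists N, forall n, (N <= n)%N -> `|th n| <= 1.
Hypothesis hthd : vanish (fun n => th n.+1 - th n).

Lemma th_ebounded : ebounded th.
Proof. by have [N h] := hthb; exists 1, N. Qed.

Lemma th_shift_diff b : vanish (fun n => th (n + b)%N - th n).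
Proof.
elim: b => [|b IH].
  by apply: (vanish_ev (@vanish0 R)); exists 0%N => n _; rewrite addn0 subrr.
apply: (vanish_ev (vanishD (vanish_shift b hthd) IH)); exists 0%N => n _.
by rewrite addnS; ring.
Qed.

Lemma th_near c b : vanish (fun n => th (n + b - c)%N - th n).
Proof.
apply: (vanish_ev (vanishB (vanish_subn c (th_shift_diff b)) (vanish_subn c (th_shift_diff c)))).
exists c => n hn; rewrite subnK // addnC -addnBA // addnC; ring.
Qed.

Lemma th_gen c b a : vanish (fun n => th (n + b - c)%N - th (n + a)%N).
Proof.
apply: (vanish_ev (vanishB (th_near c b) (th_near 0 a))); exists 0%N => n _.
rewrite subn0; ring.
Qed.

Lemma thX_ebounded a l : ebounded (fun n => th (n + a)%N ^+ l).
Proof. exact/eboundedX/ebounded_shift/th_ebounded. Qed.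

Lemma prod_lem l a b :
  vanish (fun n => \prod_(1 <= i < l.+1) th (n + b - i)%N - th (n + a)%N ^+ l).
Proof.
elim: l => [|l IH].
  apply: (vanish_ev (@vanish0 R)); exists 0%N => n _.
  by rewrite big_geq // expr0 subrr.
have e1 : ebounded (fun n => th (n + b - l.+1)%N).
  exact: (ebounded_shift b (ebounded_subn l.+1 th_ebounded)).
apply: (vanish_ev (vanishD (vanishMb IH e1) (vanishbM (thX_ebounded a l) (th_gen l.+1 b a)))).
exists 0%N => n _; rewrite big_nat_recr //= exprSr; ring.
Qed.

Definition kxl (x : R) (j : nat) :=
  \sum_(0 <= l < j.+1) (- (beta * x)) ^+ l * kappa (j - l)%N.

Lemma kx_lem j a b :
  vanish (fun n => kappa_x th kappa beta (n + b)%N j - kxl (th (n + a)%N) j).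
Proof.
apply: (vanish_ev (v := fun n => kappa_x th kappa beta (n + b)%N j - kxl (th (n + a)%N) j)
  (u := fun n => \sum_(0 <= l < j.+1) ((- beta) ^+ l * kappa (j - l)%N) *
     (\prod_(1 <= i < l.+1) th (n + b - i)%N - th (n + a)%N ^+ l))).
  apply: vanish_sum => l; apply: vanishbM; first exact: ebounded_cst.
  exact: prod_lem.
exists j.+1 => n hn.
have hm : minn j (n + b).-1 = j.
  apply/minn_idPl; rewrite -ltnS prednK; first exact: leq_trans hn (leq_addr _ _).
  exact: leq_trans (ltn0Sn _) (leq_trans hn (leq_addr _ _)).
rewrite /kappa_x hm /kxl -sumrB; apply: eq_bigr => l _.
have -> : - (beta * th (n + a)%N) = (- beta) * th (n + a)%N by rewrite mulNr.
rewrite exprMn; ring.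
Qed.

Lemma klim_rec x j :
  kappa_lim kappa beta x j.+1 = kxl x j.+1 - x * kappa_lim kappa beta x j.
Proof.
rewrite /kappa_lim big_nat_recl //= expr0 mul1r subn0 /kxl; congr (_ + _).
rewrite mulr_sumr -sumrN; apply: eq_bigr => l _.
by rewrite subSS exprS; ring.
Qed.

Lemma klim0 x : kappa_lim kappa beta x 0 = kappa 0%N.
Proof. by rewrite /kappa_lim big_nat1 subnn big_nat1 !expr0 !mul1r. Qed.

Lemma klim_bounded j a : ebounded (fun n => kappa_lim kappa beta (th (n + a)%N) j).
Proof.
rewrite /kappa_lim; apply: ebounded_sum => l.
apply: eboundedM; first exact/eboundedX/eboundedN/ebounded_shift/th_ebounded.
apply: ebounded_sum => p; apply: eboundedM; last exact: ebounded_cst.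
apply/eboundedX/eboundedN/eboundedM; first exact: ebounded_cst.
exact/ebounded_shift/th_ebounded.
Qed.

Lemma kphi_lem j : forall a,
  vanish (fun n => kappa_phi_aux th kappa beta n j - kappa_lim kappa beta (th (n + a)%N) j).
Proof.
elim: j => [|j IH] a.
  apply: (vanish_ev (@vanish0 R)); exists 1%N => -[|n] // _.
  rewrite klim0 /= /kappa_x min0n big_nat1 expr0 mul1r big_geq // mulr1 subn0.
  by rewrite mulr0 subr0 subrr.
apply: (vanish_unshift (a := 1%N)).
apply: (vanish_ev (vanishB (vanishB (kx_lem j.+1 a.+1 2) (vanishbM (ebounded_shift 1 th_ebounded)
  (IH a.+1))) (vanishMb (th_gen 0 1 a.+1) (klim_bounded j a.+1)))).
exists 0%N => n _ /=.
rewrite !addn1 /= klim_rec addSnnS subn0 addn2; ring.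
Qed.

Lemma kap_final u k : vanish (fun s => \sum_(0 <= j < u.+1)
   (kappa_phi th kappa beta s j ^+ 2 - kappa_lim kappa beta (th (s + k)%N) j ^+ 2)).
Proof.
apply: vanish_sum => j; apply: (vanish_unshift (a := 1%N)).
have h := kphi_lem j k.+1.
have eb : ebounded (fun n => (kappa_phi_aux th kappa beta n j - kappa_lim kappa beta (th (n + k.+1)%N) j)
   + 2 * kappa_lim kappa beta (th (n + k.+1)%N) j).
  apply: eboundedD; first exact: vanish_ebounded.
  apply: eboundedM; first exact: ebounded_cst.
  exact: klim_bounded.
apply: (vanish_ev (vanishMb h eb)); exists 0%N => n _.
rewrite /kappa_phi addn1 /= addSnnS; ring.
Qed.

End Kap.

Section BndRec.
Variable R : realType.
Lemma bnd_rec (a : nat -> R) (A B : R) n0 : 0 <= A -> 0 <= B < 1 ->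
  (forall n, (n0 <= n)%N -> `|a n.+1| <= A + B * `|a n|) ->
  exists C, forall n, (n0 <= n)%N -> `|a n| <= C.
Proof.
move=> A0 /andP[B0 B1] h.
have B1' : 0 < 1 - B by rewrite subr_gt0.
pose C := `|a n0| + A / (1 - B).
have AC : A / (1 - B) * (1 - B) = A by rewrite mulfVK // gt_eqF.
have hAB : 0 <= A / (1 - B) by rewrite divr_ge0 // ltW.
exists C => n hn; rewrite -(subnK hn); elim: (n - n0)%N => [|k IH].
  by rewrite add0n /C lerDl.
rewrite addSn; apply: (le_trans (h _ (leq_addl _ _))).
have Cge : 0 <= C by rewrite /C addr_ge0.
have : B * `|a (k + n0)%N| <= B * C by rewrite ler_wpM2l.
have : A + B * C <= C.
  rewrite /C; have := normr_ge0 (a n0).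
  set z := A / (1 - B) in AC hAB *; move=> hz.
  have : A = z - B * z by rewrite -AC; ring.
  nra.
lra.
Qed.
End BndRec.

Section Algo.
Variable R : realType.
Variables (yv : nat -> R) (beta : R).
Local Notation st n := (algo yv beta n).
Local Notation T n := (st_theta (st n)).
Local Notation E n := (st_e (st n)).
Local Notation X n := (st_x (st n)).
Local Notation Ph n := (st_phi (st n)).
Local Notation S n := (st_S (st n)).

Lemma E_S n : E n.+1 = yv n.+2 - T n * E n. Proof. by []. Qed.
Lemma X_S n : X n.+1 = yv n.+2 - beta * T n * X n. Proof. by []. Qed.
Lemma Ph_S n : Ph n.+1 = X n.+1 - T n * Ph n. Proof. by []. Qed.
Lemma S_S n : S n.+1 = S n + Ph n.+1 ^+ 2. Proof. by []. Qed.
Lemma T_S n : T n.+1 = T n + (S n)^-1 * Ph n * E n.+1.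
Proof.
have key : forall a s : R, a != 0 -> (a^-1 * s)^-1 * a^-1 = s^-1.
  by move=> a s a0; rewrite invfM invrK mulrAC mulfV // mul1r.
by rewrite [LHS]/= key // pnatr_eq0.
Qed.

Lemma S_ge0 n : 0 <= S n.
Proof. elim: n => [|n IH]; first by rewrite /= sqr_ge0. by rewrite S_S addr_ge0 ?sqr_ge0. Qed.

Lemma S_mono m n : (m <= n)%N -> S m <= S n.
Proof.
move=> h; rewrite -(subnK h); elim: (n - m)%N => [|k IH] //.
by rewrite addSn S_S (le_trans IH) // lerDl sqr_ge0.
Qed.

Hypothesis hbeta : 0 <= beta <= 1.
Variables (M c : R) (n0 : nat) (Ks : R).
Hypothesis hM : forall n, `|yv n| <= M.
Hypothesis c0 : 0 < c.
Hypothesis hio : forall n, exists m, (n <= m)%N /\ c <= `|yv m|.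
Hypothesis Ks1 : Ks < 1.
Hypothesis hT : forall n, (n0 <= n)%N -> `|T n| <= Ks.

Let M0 : 0 <= M. Proof. exact: le_trans (normr_ge0 _) (hM 0%N). Qed.
Let Ks0 : 0 <= Ks. Proof. exact: le_trans (normr_ge0 _) (hT (leqnn n0)). Qed.
Let Ks01 : 0 <= Ks < 1. Proof. by rewrite Ks0 Ks1. Qed.
Let hb : `|beta| <= 1. Proof. by case/andP: hbeta => h1 h2; rewrite ger0_norm. Qed.

Lemma X_bnd : exists C, forall n, (n0 <= n)%N -> `|X n| <= C.
Proof.
apply: (bnd_rec M0 Ks01) => n hn; rewrite X_S.
apply: (le_trans (ler_normB _ _)); apply: lerD => //.
rewrite !normrM; apply: ler_wpM2r; first exact: normr_ge0.
by rewrite -[Ks]mul1r; apply: ler_pM; [exact: normr_ge0|exact: normr_ge0|exact: hb|exact: hT].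
Qed.

Lemma E_bnd : exists C, forall n, (n0 <= n)%N -> `|E n| <= C.
Proof.
apply: (bnd_rec M0 Ks01) => n hn; rewrite E_S.
apply: (le_trans (ler_normB _ _)); apply: lerD => //.
rewrite !normrM; have := hT hn; have := normr_ge0 (E n); nra.
Qed.

Lemma Ph_bnd : exists C, forall n, (n0 <= n)%N -> `|Ph n| <= C.
Proof.
have [CX hX] := X_bnd.
have CX0 : 0 <= CX by exact: le_trans (normr_ge0 _) (hX _ (leqnn n0)).
apply: (bnd_rec CX0 Ks01) => n hn; rewrite Ph_S.
apply: (le_trans (ler_normB _ _)); apply: lerD; first exact/hX/(leq_trans hn).
rewrite !normrM; have := hT hn; have := normr_ge0 (Ph n); nra.
Qed.

Lemma S_jump p : (n0 <= p.+1)%N -> c <= `|yv p.+4| -> S p + c ^+ 2 / 6 <= S p.+3.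
Proof.
move=> hp hy.
have hT1 : `|T p.+1| <= 1 by exact: le_trans (hT hp) (ltW Ks1).
have hT2 : `|T p.+2| <= 1 by exact: le_trans (hT (leqW hp)) (ltW Ks1).
have ey : yv p.+4 = Ph p.+3 + (T p.+2 + beta * T p.+2) * Ph p.+2 +
   (beta * T p.+2 * T p.+1) * Ph p.+1.
  by rewrite Ph_S X_S Ph_S X_S; ring.
have eS : S p.+3 = S p + Ph p.+1 ^+ 2 + Ph p.+2 ^+ 2 + Ph p.+3 ^+ 2.
  by rewrite !S_S; ring.
have hbt2 : `|beta| * `|T p.+2| <= 1.
  rewrite -[Y in _ <= Y]mul1r; apply: ler_pM; [exact: normr_ge0|exact: normr_ge0|exact: hb|exact: hT2].
set u := `|Ph p.+1|; set v := `|Ph p.+2|; set w := `|Ph p.+3|.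
have hyb : `|yv p.+4| <= w + 2 * v + u.
  rewrite ey; apply: (le_trans (ler_normD _ _)); apply: lerD; last first.
    rewrite !normrM /u -[Y in _ <= Y]mul1r; apply: ler_wpM2r; first exact: normr_ge0.
    rewrite -[Y in _ <= Y]mul1r; apply: ler_pM; [exact: mulr_ge0 (normr_ge0 _) (normr_ge0 _)|exact: normr_ge0|exact: hbt2|exact: hT1].
  apply: (le_trans (ler_normD _ _)); apply: lerD => //.
  rewrite normrM /v; apply: ler_wpM2r; first exact: normr_ge0.
  apply: (le_trans (ler_normD _ _)); rewrite normrM; lra.
have u0 : 0 <= u by exact: normr_ge0.
have v0 : 0 <= v by exact: normr_ge0.
have w0 : 0 <= w by exact: normr_ge0.
rewrite eS.
have -> : Ph p.+1 ^+ 2 = u ^+ 2 by rewrite /u real_normK ?num_real.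
have -> : Ph p.+2 ^+ 2 = v ^+ 2 by rewrite /v real_normK ?num_real.
have -> : Ph p.+3 ^+ 2 = w ^+ 2 by rewrite /w real_normK ?num_real.
have hc : c <= w + 2 * v + u by exact: le_trans hy hyb.
have : c ^+ 2 <= (w + 2 * v + u) ^+ 2 by rewrite ler_sqr ?nnegrE ?(ltW c0) //; lra.
have := sqr_ge0 (2 * u - v); have := sqr_ge0 (2 * w - v); have := sqr_ge0 (u - w).
rewrite !expr2; lra.
Qed.

Lemma S_unbounded (B : R) : exists m, B <= S m.
Proof.
have step : forall k : nat, exists m, k%:R * (c ^+ 2 / 6) <= S m.
  elim=> [|k [m hm]]; first by exists 0%N; rewrite mul0r S_ge0.
  have [m' [hm' hy]] := hio (m + n0).+4.
  have hm'' : m' = (m' - 4).+4 by lia.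
  rewrite hm'' in hy.
  exists (m' - 4).+3.
  have h1 : (n0 <= (m' - 4).+1)%N by lia.
  apply: (le_trans _ (S_jump h1 hy)).
  have : S m <= S (m' - 4) by apply: S_mono; lia.
  rewrite -natr1 mulrDl mul1r; lra.
have cc : 0 < c ^+ 2 / 6 by rewrite divr_gt0 // exprn_gt0.
have [k hk] : exists k : nat, B / (c ^+ 2 / 6) < k%:R.
  by exists (Num.truncn (B / (c ^+ 2 / 6))).+1; rewrite Num.Theory.truncnS_gt.
have [m hm] := step k; exists m; apply: (le_trans _ hm).
by rewrite -ler_pdivrMr // ltW.
Qed.

Lemma T_vanish : vanish (fun n => T n.+1 - T n).
Proof.
have [CP hP] := Ph_bnd; have [CE hE] := E_bnd.
move=> e e0.
pose D := `|CP| * `|CE|.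
have D0 : 0 <= D by rewrite mulr_ge0.
have [m hm] := S_unbounded ((D + 1) / e).
exists (maxn m n0) => n; rewrite geq_max => /andP[hmn hn].
rewrite T_S addrC addKr.
have hS : (D + 1) / e <= S n := le_trans hm (S_mono hmn).
have Spos : 0 < S n by apply: lt_le_trans hS; rewrite divr_gt0 // ltr_wpDl.
have hx : `|Ph n * E n.+1| <= D.
  rewrite normrM /D; apply: ler_pM; try exact: normr_ge0.
    exact: le_trans (hP _ hn) (ler_norm _).
  exact: le_trans (hE _ (leqW hn)) (ler_norm _).
rewrite -mulrA normrM normfV (gtr0_norm Spos) mulrC ler_pdivrMr //.
rewrite ler_pdivrMr // in hS.
have : D * 1 <= D * 1 + 1 by rewrite lerDl.
rewrite mulr1 in hS *; nra.
Qed.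

Lemma theta_props :
  vanish (fun n => theta yv beta n.+1 - theta yv beta n) /\
  exists N, forall n, (N <= n)%N -> `|theta yv beta n| <= 1.
Proof.
split.
  apply: (vanish_unshift (a := 1%N)); apply: (vanish_ev T_vanish).
  by exists 0%N => n _; rewrite /theta addn1.
exists n0.+1 => -[|n] // hn; rewrite /theta /=.
exact: le_trans (hT hn) (ltW Ks1).
Qed.

End Algo.

Section PrS.
Context {d : measure_display} {Omega : measurableType d} {R : realType}.
Variable P : probability Omega R.

Definition Pr (A : set Omega) : R := fine (P A).

Lemma PrE A : measurable A -> P A = (Pr A)%:E.
Proof. by move=> mA; rewrite /Pr fineK // fin_num_measure. Qed.

Lemma Pr_ge0 A : 0 <= Pr A.
Proof. by rewrite /Pr fine_ge0 // measure_ge0. Qed.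

Lemma Pr_le A B : measurable A -> measurable B -> A `<=` B -> Pr A <= Pr B.
Proof.
move=> mA mB AB; rewrite -lee_fin -!PrE //; by apply: le_measure; rewrite ?inE.
Qed.

Lemma PrU A B : measurable A -> measurable B -> A `&` B = set0 ->
  Pr (A `|` B) = Pr A + Pr B.
Proof.
move=> mA mB AB; apply/eqP; rewrite -eqe EFinD -!PrE //; last exact: measurableU.
by rewrite measureU.
Qed.

Lemma PrT : Pr setT = 1.
Proof. by rewrite /Pr probability_setT. Qed.

Lemma Pr_null A N : measurable A -> measurable N -> P N = 0%E -> Pr A = Pr (A `\` N).
Proof.
move=> mA mN N0.
have e : A = (A `\` N) `|` (A `&` N).
  by apply/seteqP; split=> w /=; [case: (pselect (N w)) => ?; [right|left]|case=> -[]].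
have h0 : Pr (A `&` N) = 0.
  apply/le_anti; rewrite Pr_ge0 andbT -lee_fin -PrE; last exact: measurableI.
  apply: (@le_trans _ _ (P N)); last by rewrite N0.
  by apply: le_measure; rewrite ?inE //; exact: measurableI.
rewrite {1}e PrU ?h0 ?addr0 //; [exact: measurableD|exact: measurableI|].
by apply/seteqP; split=> w // /= [[_ nN] [_ hN]].
Qed.

End PrS.

Section Filt.
Context {d : measure_display} {Omega : measurableType d} {R : realType}.
Variable y : int -> Omega -> R.
Hypothesis y_meas : forall t, measurable_fun [set: Omega] (y t).

Definition gen (t : int) : set (set Omega) :=
  [set A | exists s : int, exists B : set R,
                 (s <= t)%R /\ measurable B /\ A = y s @^-1` B].

Definition GT t := g_sigma_algebraType (gen t).

Lemma natfiltE t A : natfilt y t A = @measurable _ (GT t) A.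
Proof. by []. Qed.

Lemma natfilt_T t : natfilt y t setT.
Proof. by rewrite natfiltE; exact: measurableT. Qed.

Lemma natfilt_I t A B : natfilt y t A -> natfilt y t B -> natfilt y t (A `&` B).
Proof. rewrite !natfiltE; exact: measurableI. Qed.

Lemma natfilt_C t A : natfilt y t A -> natfilt y t (~` A).
Proof. rewrite !natfiltE; exact: measurableC. Qed.

Lemma natfilt_mono s t : (s <= t)%R -> natfilt y s `<=` natfilt y t.
Proof.
move=> st; apply: sub_sigma_algebra2 => A [s' [B [hs [mB ->]]]].
by exists s', B; split => //; exact: le_trans st.
Qed.

Lemma natfilt_meas t : natfilt y t `<=` measurable.
Proof.
apply: smallest_sub; first exact: sigma_algebra_measurable.
move=> A [s [B [_ [mB ->]]]].
by rewrite -[_ @^-1` _]setTI; exact: y_meas.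
Qed.

Lemma natfilt_ylt t (c : R) : natfilt y t [set w | `|y t w| < c].
Proof.
apply: sub_sigma_algebra; exists t, `]-c, c[%classic; split => //; split.
  exact: measurable_itv.
by apply/seteqP; split => w /=; rewrite in_itv /= ltr_norml.
Qed.

Lemma natfilt_fun t (f : Omega -> R) :
  (forall B, measurable B -> natfilt y t (f @^-1` B)) ->
  @measurable_fun _ _ (GT t) R setT f.
Proof. by move=> h _ B mB; rewrite setTI; exact: h. Qed.

Lemma natfilt_of_fun t (f : Omega -> R) (B : set R) :
  @measurable_fun _ _ (GT t) R setT f -> measurable B -> natfilt y t (f @^-1` B).
Proof. by move=> mf mB; have := mf measurableT B mB; rewrite setTI. Qed.

End Filt.

Section Filt2.
Context {d : measure_display} {Omega : measurableType d} {R : realType}.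
Variables (y eps : int -> Omega -> R) (kappa : nat -> R).
Hypothesis hadapt : forall t : int, forall B : set R, measurable B ->
     natfilt y t (eps t @^-1` B).

Lemma natfilt_sum (t : int) (N : nat) :
  natfilt y (t - 1) [set w | 0 <= \sum_(1 <= s < N.+1) kappa s * eps (t - s%:Z) w].
Proof.
have -> : [set w | 0 <= \sum_(1 <= s < N.+1) kappa s * eps (t - s%:Z) w] =
   (fun w => \sum_(1 <= s < N.+1) kappa s * eps (t - s%:Z) w) @^-1` `[0, +oo[%classic.
  by apply/seteqP; split => w /=; rewrite in_itv /= andbT.
apply: natfilt_of_fun; last exact: measurable_itv.
rewrite (_ : (fun w => _) = (fun w => \sum_(0 <= s < N) kappa s.+1 * eps (t - s.+1%:Z) w)); last first.
  by apply/funext => w; rewrite big_add1.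
apply: measurable_sum => s.
apply: measurable_funM; first exact: measurable_cst.
apply: natfilt_fun => B mB; apply: (natfilt_mono (s := t - s.+1%:Z)); last exact: hadapt.
by rewrite lerB // lez_nat.
Qed.
End Filt2.

Section Key.
Context {d : measure_display} {Omega : measurableType d} {R : realType}.
Variable P : probability Omega R.

Lemma bdd_int (f : Omega -> R) (D : set Omega) (K : R) : measurable D ->
  measurable_fun D f -> (forall w, D w -> `|f w| <= K) ->
  P.-integrable D (fun w => (f w)%:E).
Proof.
move=> mD mf hK; apply: (measurable_bounded_integrable (f := f)) => //.
  by rewrite (le_lt_trans (probability_le1 P mD)) ?ltry.
exists K; split; first by rewrite num_real.
move=> M KM x Dx /=; apply: (le_trans (hK x Dx)); exact: ltW.
Qed.

Lemma key_gen (f : Omega -> R) (A N0 : set Omega) (K s2 delta : R) :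
  measurable A -> measurable N0 -> P N0 = 0%E ->
  measurable_fun setT f ->
  (forall w, ~ N0 w -> `|f w| <= K) ->
  (\int[P]_(w in A) (f w)%:E = 0)%E ->
  (\int[P]_(w in A) (f w ^+ 2)%:E = s2%:E * P A)%E ->
  0 < K -> 0 < delta -> delta * (delta + K) <= s2 / 2 ->
  s2 / 2 * Pr P A <= 2 * K ^+ 2 * Pr P (A `&` [set w | delta <= f w]).
Proof.
move=> mA mN hN0 mf hK hI1 hI2 K0 d0 hdK.
pose D := A `\` N0.
have mD : measurable D by exact: measurableD.
have hKD : forall w, D w -> `|f w| <= K by move=> w [_ ?]; exact: hK.
have mfD : measurable_fun D f by exact: measurable_funS mf.
have mf2D : measurable_fun D (fun w => f w ^+ 2) by exact: measurable_funX.
have iD1 : P.-integrable D (fun w => (f w)%:E) by exact: bdd_int hKD.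
have iD2 : P.-integrable D (fun w => (f w ^+ 2)%:E).
  apply: (bdd_int (K := K ^+ 2)) => // w Dw.
  rewrite normrX; have := hKD w Dw; have := normr_ge0 (f w); rewrite !expr2; nra.
have iA2 : P.-integrable A (fun w => (f w ^+ 2)%:E).
  apply/(negligible_integrable mN mA _ hN0) => //.
  by apply/measurable_EFinP; exact: measurable_funX (measurable_funS _ _ mf).
have iA1 : P.-integrable A (fun w => (f w)%:E).
  apply/(negligible_integrable mN mA _ hN0) => //.
  by apply/measurable_EFinP; exact: (measurable_funS _ _ mf).
have J1 : (\int[P]_(w in D) (f w)%:E = 0)%E.
  by rewrite -hI1 (negligible_integral mN mA iA1 hN0).
have J2 : (\int[P]_(w in D) (f w ^+ 2)%:E = s2%:E * P A)%E.
  by rewrite -hI2 (negligible_integral mN mA iA2 hN0).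
pose E := [set w | delta <= f w].
have mE : measurable E.
  rewrite (_ : E = f @^-1` `[delta, +oo[%classic); last first.
    by apply/seteqP; split => w /=; rewrite in_itv /= andbT.
  by rewrite -[_ @^-1` _]setTI; apply: mf => //; exact: measurable_itv.
have iC : P.-integrable D (fun w => (delta * (delta + K))%:E).
  exact: finite_measure_integrable_cst.
have iI : P.-integrable D (fun w => (\1_E w)%:E).
  apply: (integrableS measurableT mD) => //; exact: integrable_indic.
have L : (\int[P]_(w in D) ((f w ^+ 2)%:E + K%:E * (f w)%:E) = s2%:E * P A)%E.
  rewrite (integralD mD iD2 (integrableZl mD K iD1)).
  by rewrite (integralZl mD iD1) J1 J2 mule0 adde0.
have Rr : (\int[P]_(w in D) ((delta * (delta + K))%:E + (2 * K ^+ 2)%:E * (\1_E w)%:E)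
    = (delta * (delta + K))%:E * P D + (2 * K ^+ 2)%:E * P (E `&` D))%E.
  rewrite (integralD mD iC (integrableZl mD _ iI)).
  rewrite (integralZl mD iI) (integral_indic _ mD mE).
  by rewrite (integral_cst _ mD).
have le : (\int[P]_(w in D) ((f w ^+ 2)%:E + K%:E * (f w)%:E) <=
   \int[P]_(w in D) ((delta * (delta + K))%:E + (2 * K ^+ 2)%:E * (\1_E w)%:E))%E.
  apply: (le_integral mD).
  - exact: (integrableD mD iD2 (integrableZl mD _ iD1)).
  - exact: (integrableD mD iC (integrableZl mD _ iI)).
  move=> w /set_mem Dw; rewrite -EFinM -EFinD -EFinM -EFinD lee_fin.
  have := hKD w Dw; rewrite /indic /E /=; case: (pselect (delta <= f w)) => h.
    rewrite mem_set //= => hb.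
    have : f w <= K by exact: le_trans (ler_norm _) hb.
    have : - K <= f w by rewrite -lerNl; apply: le_trans (ler_norm _) _; rewrite normrN.
    rewrite mulr1; nra.
  rewrite memNset //= mulr0 addr0 => hb.
  have : - K <= f w by rewrite -lerNl; apply: le_trans (ler_norm _) _; rewrite normrN.
  move/negP: h; rewrite -ltNge => h.
  case: (lerP (f w) 0) => h0; nra.
rewrite L Rr !(PrE P) // in le; last exact: measurableI.
rewrite -EFinM -!EFinM -EFinD lee_fin in le.
rewrite -(Pr_null mA mN hN0) -/D in le.
have hE : Pr P (E `&` D) <= Pr P (A `&` E).
  apply: Pr_le; [exact: measurableI|exact: measurableI|].
  by move=> w [Ew [Aw _]].
have := Pr_ge0 P A; have := Pr_ge0 P (E `&` D).
have K2 : 0 <= 2 * K ^+ 2 by rewrite mulr_ge0 // sqr_ge0.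
nra.
Qed.

End Key.

Section Ser.
Variable R : realType.

Lemma geom0 (x r : R) : 0 <= r < 1 -> (forall m, x <= r ^+ m) -> x <= 0.
Proof.
move=> /andP[r0 r1] h.
have hr : `|r| < 1 by rewrite ger0_norm.
apply: (cvgr_to_ge (cvg_expr hr)); exact: nearW.
Qed.

Lemma series_tail (a b : nat -> R) (Y Lb : R) :
  series a @ \oo --> Y -> series b @ \oo --> Lb -> (forall s, `|a s| <= b s) ->
  forall N, `|Y - \sum_(0 <= s < N) a s| <= Lb - \sum_(0 <= s < N) b s.
Proof.
move=> ha hb hab N.
have b0 : forall s, 0 <= b s by move=> s; exact: le_trans (normr_ge0 _) (hab s).
have hnd : nondecreasing_seq (series b).
  apply/nondecreasing_seqP => n; rewrite /series /= big_nat_recr //= lerDl; exact: b0.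
have hle : forall m, series b m <= Lb.
  move=> m; have := nondecreasing_cvgn_le hnd (cvgP _ hb) m.
  by rewrite (cvg_lim _ hb).
have hc : (fun m => `|series a m - \sum_(0 <= s < N) a s|) @ \oo --> `|Y - \sum_(0 <= s < N) a s|.
  apply: cvg_norm; apply: cvgB => //; exact: cvg_cst.
apply: (cvgr_to_le hc); near=> m.
have hm : (N <= m)%N by near: m; exact: nbhs_infty_ge.
rewrite /series /= (big_cat_nat _ (n := N)) //= addrC addrK.
apply: (le_trans (ler_norm_sum _ _ _)).
apply: (le_trans (y := \sum_(N <= s < m) b s)); first exact: ler_sum.
have := hle m; rewrite /series /= (big_cat_nat _ (n := N)) //=; lra.
Unshelve. all: by end_near.
Qed.

End Ser.

Section MainP.
Context {d : measure_display} {Omega : measurableType d} {R : realType}.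
Variable P : probability Omega R.
Variables (y eps : int -> Omega -> R) (kappa : nat -> R) (sigma2 : R).
Hypothesis y_meas : forall t, measurable_fun [set: Omega] (y t).
Hypothesis D2_k0 : kappa 0%N = 1.
Hypothesis mds_adapted : forall t : int, forall B : set R, measurable B ->
     natfilt y t (eps t @^-1` B).
Hypothesis mds_int : forall t, P.-integrable [set: Omega] (fun w => (eps t w)%:E).
Hypothesis mds_0 : forall (t : int) (A : set Omega), natfilt y (t - 1) A ->
     (\int[P]_(w in A) (eps t w)%:E = 0)%E.
Hypothesis D3 : forall (t : int) (A : set Omega), natfilt y (t - 1) A ->
     (\int[P]_(w in A) (eps t w ^+ 2)%:E = sigma2%:E * P A)%E.
Variables (K Lk : R) (N0 : set Omega).
Hypothesis K0 : 0 < K.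
Hypothesis mN0 : measurable N0.
Hypothesis PN0 : P N0 = 0%E.
Hypothesis hN0 : forall w, ~ N0 w -> forall t, `|eps t w| <= K.
Hypothesis hser : forall w, ~ N0 w -> forall n : nat,
  series (fun s => kappa s * eps (n%:Z - s%:Z) w) @ \oo --> y n%:Z w.
Hypothesis hLk : series (fun s => `|kappa s|) @ \oo --> Lk.
Hypothesis s2pos : 0 < sigma2.

Definition delta := Num.min K (sigma2 / (4 * K)).
Definition cc := delta / 2.
Definition qq := sigma2 / (4 * K ^+ 2).

Lemma delta_gt0 : 0 < delta.
Proof. by rewrite /delta lt_min K0 divr_gt0 // mulr_gt0. Qed.

Lemma delta_le : delta <= K.
Proof. by rewrite /delta ge_min lexx. Qed.

Lemma delta_ineq : delta * (delta + K) <= sigma2 / 2.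
Proof.
have h1 : delta <= sigma2 / (4 * K) by rewrite /delta ge_min lexx orbT.
have h2 := delta_le; have h3 := delta_gt0.
have : delta * (4 * K) <= sigma2 by rewrite -ler_pdivlMr // mulr_gt0.
nra.
Qed.

Lemma qq_gt0 : 0 < qq.
Proof. by rewrite /qq divr_gt0 // mulr_gt0 // exprn_gt0. Qed.

Lemma eps_meas t : measurable_fun [set: Omega] (eps t).
Proof.
move=> _ B mB; rewrite setTI; apply: (natfilt_meas y_meas); exact: mds_adapted.
Qed.

Lemma ser_scale : series (fun s => K * `|kappa s|) @ \oo --> K * Lk.
Proof.
have -> : series (fun s => K * `|kappa s|) = (fun n => K * series (fun s => `|kappa s|) n).
  by apply/funext => n; rewrite /series /= big_distrr.
exact: cvgMl_tmp.
Qed.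

Lemma choose_N : exists N : nat, K * (Lk - \sum_(0 <= s < N.+1) `|kappa s|) <= cc.
Proof.
have cK : 0 < cc / K by rewrite divr_gt0 // /cc divr_gt0 // delta_gt0.
have [M _ hM] := cvgr_dist_le _ _ hLk _ cK.
exists M; have := hM M.+1 (leqW (leqnn M)); rewrite /series /= => h.
have h2 := le_trans (ler_norm _) h.
apply: (le_trans (ler_wpM2l (ltW K0) h2)); rewrite mulrC divfK // gt_eqF //.
Qed.

Lemma y_tail w : ~ N0 w -> forall (n N : nat),
  `|y n%:Z w - \sum_(0 <= s < N) kappa s * eps (n%:Z - s%:Z) w|
     <= K * Lk - \sum_(0 <= s < N) K * `|kappa s|.
Proof.
move=> hw n N; apply: (@series_tail _ (fun s => kappa s * eps (n%:Z - s%:Z) w) (fun s => K * `|kappa s|) _ _ (@hser w hw n) ser_scale) => s.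
by rewrite normrM mulrC ler_wpM2r // hN0.
Qed.

Lemma y_bound w : ~ N0 w -> forall n : nat, `|y n%:Z w| <= K * Lk.
Proof. by move=> hw n; have := y_tail hw n 0; rewrite !big_geq // !subr0. Qed.


Lemma mle (f : Omega -> R) (a : R) : measurable_fun setT f -> measurable [set w | a <= f w].
Proof.
move=> mf; rewrite (_ : [set w | a <= f w] = f @^-1` `[a, +oo[%classic); last first.
  by apply/seteqP; split => w /=; rewrite in_itv /= andbT.
by rewrite -[_ @^-1` _]setTI; apply: mf => //; exact: measurable_itv.
Qed.

Lemma keyY (n : nat) (A : set Omega) : natfilt y (n%:Z - 1) A ->
  Pr P (A `&` [set w | `|y n%:Z w| < cc]) <= (1 - qq) * Pr P A.
Proof.
move=> hA.
have [N hN] := choose_N.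
pose t := n%:Z.
pose SN := fun w => \sum_(1 <= s < N.+1) kappa s * eps (t - s%:Z) w.
pose F1 := [set w | 0 <= SN w].
have hF1 : natfilt y (t - 1) F1 := natfilt_sum kappa mds_adapted N.
pose A1 := A `&` F1.
pose A2 := A `&` ~` F1.
have hA1 : natfilt y (t - 1) A1 := natfilt_I hA hF1.
have hA2 : natfilt y (t - 1) A2 := natfilt_I hA (natfilt_C hF1).
have mA : measurable A := natfilt_meas y_meas hA.
have mA1 : measurable A1 := natfilt_meas y_meas hA1.
have mA2 : measurable A2 := natfilt_meas y_meas hA2.
have meps := eps_meas t.
have mneps : measurable_fun setT (fun w => - eps t w) by exact: measurable_funN.
have k1 : sigma2 / 2 * Pr P A1 <= 2 * K ^+ 2 * Pr P (A1 `&` [set w | delta <= eps t w]).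
  apply: (key_gen (N0 := N0)) => //.
  - by move=> w hw; exact: hN0.
  - exact: mds_0.
  - exact: D3.
  - exact: delta_gt0.
  - exact: delta_ineq.
have k2 : sigma2 / 2 * Pr P A2 <= 2 * K ^+ 2 * Pr P (A2 `&` [set w | delta <= - eps t w]).
  apply: (key_gen (N0 := N0)) => //.
  - by move=> w hw; rewrite normrN; exact: hN0.
  - have iA2 : P.-integrable A2 (fun w => (eps t w)%:E).
      exact: (integrableS measurableT mA2 (@subsetT _ _) (mds_int t)).
    rewrite (eq_integral (fun w => (- (eps t w)%:E)%E)); last by move=> w _; rewrite EFinN.
    rewrite integralN; first by rewrite mds_0 // oppe0.
    exact: integrable_add_def.
  - rewrite (eq_integral (fun w => (eps t w ^+ 2)%:E)); last by move=> w _; rewrite sqrrN.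
    exact: D3.
  - exact: delta_gt0.
  - exact: delta_ineq.
pose X := A `&` [set w | `|y t w| < cc].
have mX : measurable X.
  apply: measurableI => //; apply: (natfilt_meas y_meas (t := t)); exact: natfilt_ylt.
pose E1 := A1 `&` [set w | delta <= eps t w].
pose E2 := A2 `&` [set w | delta <= - eps t w].
have mE1 : measurable E1 by apply: measurableI => //; exact: mle.
have mE2 : measurable E2 by apply: measurableI => //; exact: mle.
pose X' := X `\` N0.
have mX' : measurable X' by exact: measurableD.
have tail : forall w, ~ N0 w -> `|y t w - (eps t w + SN w)| <= cc.
  move=> w hw; have := y_tail hw n N.+1.
  rewrite (big_ltn (ltn0Sn N)) D2_k0 mul1r subr0 -big_distrr /= -mulrBr => h.
  exact: le_trans h hN.
have hd := delta_gt0.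
have hcc : cc = delta / 2 by [].
have d1 : X' `&` E1 = set0.
  apply/seteqP; split => w // [[[Aw hy] hw] [[_ hS] he]].
  have := tail w hw; move: hy hS he; rewrite /F1 /SN /= => hy hS he.
  rewrite ler_norml => /andP[t1 t2]; rewrite ltr_norml in hy; case/andP: hy => hy1 hy2.
  lra.
have d2 : X' `&` E2 = set0.
  apply/seteqP; split => w // [[[Aw hy] hw] [[_ hS] he]].
  have := tail w hw; move: hy hS he; rewrite /F1 /SN /= => hy hS he.
  move/negP: hS; rewrite -ltNge => hS.
  rewrite ler_norml => /andP[t1 t2]; rewrite ltr_norml in hy; case/andP: hy => hy1 hy2.
  lra.
have d3 : E1 `&` E2 = set0.
  by apply/seteqP; split => w // [[[_ h1] _] [[_ h2] _]].
have eU : Pr P (X' `|` E1 `|` E2) = Pr P X' + Pr P E1 + Pr P E2.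
  rewrite PrU //; last by rewrite setIUl d2 d3 setU0.
  - by rewrite PrU.
  - exact: measurableU.
have lU : Pr P (X' `|` E1 `|` E2) <= Pr P A.
  apply: Pr_le => //; first by apply: measurableU => //; exact: measurableU.
  by move=> w [[[[Aw _] _]|[[Aw _] _]]|[[Aw _] _]].
have eA : Pr P A = Pr P A1 + Pr P A2.
  rewrite -PrU //; last by apply/seteqP; split => w // [[_ h1] [_ h2]].
  congr (Pr P _); apply/seteqP; split => w.
    by move=> Aw; case: (pselect (F1 w)) => h; [left|right].
  by case=> -[].
have eX : Pr P X = Pr P X' := Pr_null mX mN0 PN0.
have K2 : 0 < 2 * K ^+ 2 by rewrite mulr_gt0 // exprn_gt0.
have eq : sigma2 / 2 = 2 * K ^+ 2 * qq.
  by rewrite /qq; field; exact: lt0r_neq0.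
rewrite eq -mulrA ler_pM2l // in k1.
rewrite eq -mulrA ler_pM2l // in k2.
have f1 : Pr P X' <= Pr P A - (qq * Pr P A1 + qq * Pr P A2) by lra.
rewrite eX; apply: (le_trans f1); by rewrite -mulrDr -eA mulrBl mul1r.
Qed.

Fixpoint Bset (n m : nat) : set Omega :=
  if m is m'.+1 then Bset n m' `&` [set w | `|y (n + m')%:Z w| < cc] else setT.

Lemma Bset_filt n m : natfilt y ((n + m)%:Z - 1) (Bset n m).
Proof.
elim: m => [|m IH] /=; first exact: natfilt_T.
apply: natfilt_I.
  apply: (natfilt_mono (s := ((n + m)%:Z - 1))) => //.
  by rewrite lerB // lez_nat leq_add2l.
have -> : ((n + m.+1)%:Z - 1) = (n + m)%:Z by rewrite addnS -addn1 PoszD addrK.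
exact: natfilt_ylt.
Qed.

Lemma qq_le1 : qq <= 1.
Proof.
have hT : natfilt y (0%:Z - 1) setT by apply: natfilt_T.
have := keyY (n := 0) hT; rewrite PrT mulr1.
have := Pr_ge0 P (setT `&` [set w | `|y 0%:Z w| < cc]); lra.
Qed.

Lemma Bset_bound n m : Pr P (Bset n m) <= (1 - qq) ^+ m.
Proof.
elim: m => [|m IH]; first by rewrite /= PrT expr0.
rewrite /= exprS; apply: (le_trans (keyY (n := (n + m)%N) (Bset_filt (n:=n) (m:=m)))).
by apply: ler_wpM2l => //; have := qq_le1; lra.
Qed.

Lemma C_meas n : measurable [set w | forall i : nat, `|y (n + i)%:Z w| < cc].
Proof.
pose C := [set w | forall i : nat, `|y (n + i)%:Z w| < cc].
rewrite -/C.
  rewrite (_ : C = \bigcap_i [set w | `|y (n + i)%:Z w| < cc]); last first.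
    by apply/seteqP; split => w /= h; [move=> i _; exact: h|move=> i; exact: (h i I)].
  apply: bigcapT_measurable => i; apply: (natfilt_meas y_meas (t := (n + i)%:Z)).
  exact: natfilt_ylt.
Qed.

Lemma C_null n : P [set w | forall i : nat, `|y (n + i)%:Z w| < cc] = 0%E.
Proof.
pose C := [set w | forall i : nat, `|y (n + i)%:Z w| < cc].
have mC : measurable C := C_meas n.
have sub : forall m, C `<=` Bset n m.
  by elim=> [|m IH] w // hw; split; [exact: IH|exact: hw].
have mB : forall m, measurable (Bset n m).
  move=> m; apply: (natfilt_meas y_meas); exact: Bset_filt.
have h0 : Pr P C <= 0.
  apply: (@geom0 _ _ (1 - qq)).
    have := qq_le1; have := qq_gt0; move=> h1 h2; apply/andP; split; lra.
  move=> m; apply: le_trans (Bset_bound n m); exact: Pr_le.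
rewrite (PrE P mC); congr (_%:E); apply/le_anti; rewrite h0; exact: Pr_ge0.
Qed.

Lemma io_ae : {ae P, forall w, forall n : nat, exists i : nat, cc <= `|y (n + i)%:Z w|}.
Proof.
apply: (negligibleS _ (negligible_bigcup (F := fun n => [set w | forall i : nat, `|y (n + i)%:Z w| < cc]) _)).
  move=> w /= hw.
  have [n hn] : exists n, ~ (exists i : nat, cc <= `|y (n + i)%:Z w|).
    apply: contrapT => hc; apply: hw => n; apply: contrapT => hn; apply: hc; by exists n.
  exists n => // i; rewrite ltNge; apply/negP => h; apply: hn; by exists i.
move=> n; exists [set w | forall i : nat, `|y (n + i)%:Z w| < cc]; split => //.
  exact: C_meas.
exact: C_null.
Qed.

End MainP.

Lemma point_main (R : realType) (yv : nat -> R) (beta sigma2 : R) (kappa : nat -> R)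
  (u k : nat) (M c : R) (n0 : nat) (Ks : R) :
  0 <= beta <= 1 -> (forall n, `|yv n| <= M) -> 0 < c ->
  (forall n, exists i, c <= `|yv (n + i)%N|) -> Ks < 1 ->
  (forall t : nat, (1 <= t)%N -> `|theta yv beta (t + n0)| <= Ks) ->
  let th := theta yv beta in
  (fun t : nat =>
         sigma2 / t%:R * \sum_(1 <= s < t.+1) \sum_(0 <= j < u.+1)
            kappa_phi th kappa beta s j ^+ 2
         - sigma2 / t%:R * \sum_(1 <= s < t.+1) \sum_(0 <= j < u.+1)
            kappa_lim kappa beta (th (s + k)%N) j ^+ 2) @ \oo --> 0.
Proof.
move=> hb hM c0 hio Ks1 hth th.
have hio' : forall n, exists m, (n <= m)%N /\ c <= `|yv m|.
  by move=> n; have [i hi] := hio n; exists (n + i)%N; rewrite leq_addr.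
have hT : forall n, (n0 <= n)%N -> `|st_theta (algo yv beta n)| <= Ks.
  move=> n hn; have := hth (n.+1 - n0)%N; rewrite subnK; last exact: leqW.
  by apply; rewrite subn_gt0 ltnS.
have [hd [N hN]] := theta_props hb hM c0 hio' Ks1 hT.
have hb' : `|beta| <= 1 by case/andP: hb => h1 h2; rewrite ger0_norm.
have hK := kap_final kappa beta (ex_intro _ N hN) hd u k.
have hC := vanish_cesaro hK.
have hS := vanishbM (ebounded_cst sigma2) hC.
apply: (vanish_cvg (vanish_ev hS _)); exists 0%N => t _.
rewrite -!mulrA -mulrBr; congr (_ * _); rewrite -mulrBr; congr (_ * _).
rewrite -sumrB; apply: eq_bigr => s _; rewrite -sumrB //.
Qed.

End Helpers.
Import Helpers.

Theorem lemma4p4 (d : measure_display) (Omega : measurableType d)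
  (R : realType) (P : probability Omega R)
  (y eps : int -> Omega -> R) (kappa : nat -> R) (sigma2 : R) (beta : R)
  (* y: real, mean-zero, covariance-stationary *)
  (y_meas : forall t, measurable_fun [set: Omega] (y t))
  (y_int : forall t, P.-integrable [set: Omega] (fun w => (y t w)%:E))
  (y_L2 : forall t, P.-integrable [set: Omega] (fun w => (y t w ^+ 2)%:E))
  (y_mean0 : forall t, (\int[P]_w (y t w)%:E = 0)%E)
  (y_cov : forall t h : int,
     (\int[P]_w (y t w * y (t + h)%R w)%:E = \int[P]_w (y 0 w * y h w)%:E)%E)
  (* (D1) *)
  (D1 : P [set w | 0 < y 1 w ^+ 2] = 1%E)
  (* (D2) *)
  (D2_k0 : kappa 0%N = 1)
  (D2_sum : cvg (series (fun s => `|kappa s|) @ \oo))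
  (D2_root : forall z : R[i], `|z| <= 1 ->
     ~ (series (fun s => kappa s * complex.Re (z ^+ s)) @ \oo --> 0 /\
        series (fun s => kappa s * complex.Im (z ^+ s)) @ \oo --> 0))
  (D2_ma : forall t : int,
     {ae P, forall w, series (fun s => kappa s * eps (t - s%:Z) w) @ \oo
                        --> y t w})
  (* eps is a martingale difference sequence w.r.t. F_t = sigma(y_s, s <= t) *)
  (mds_adapted : forall t : int, forall B : set R, measurable B ->
     natfilt y t (eps t @^-1` B))
  (mds_int : forall t, P.-integrable [set: Omega] (fun w => (eps t w)%:E))
  (mds_0 : forall (t : int) (A : set Omega), natfilt y (t - 1) A ->
     (\int[P]_(w in A) (eps t w)%:E = 0)%E)
  (* (D3) E[eps_t^2 | F_{t-1}] = sigma2 a.s. *)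
  (D3 : forall (t : int) (A : set Omega), natfilt y (t - 1) A ->
     (\int[P]_(w in A) (eps t w ^+ 2)%:E = sigma2%:E * P A)%E)
  (* (D4) *)
  (D4 : exists K : R, {ae P, forall w, forall t, `|eps t w| <= K})
  (* boundedness of theta after a random time *)
  (Htheta : exists (ks : Omega -> nat) (Ks : Omega -> R),
     (forall n, measurable [set w | ks w = n]) /\
     measurable_fun [set: Omega] Ks /\
     (forall w, 0 < Ks w < 1) /\
     {ae P, forall w, forall t : nat, (1 <= t)%N ->
        `|theta (fun n => y n%:Z w) beta (t + ks w)| <= Ks w})
  : (0 <= beta <= 1) ->
    forall (u : nat) (k : Omega -> nat),
    (forall n, measurable [set w | k w = n]) ->
    {ae P, forall w,
      let th := theta (fun n => y n%:Z w) beta in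
      (fun t : nat =>
         sigma2 / t%:R * \sum_(1 <= s < t.+1) \sum_(0 <= j < u.+1)
            kappa_phi th kappa beta s j ^+ 2
         - sigma2 / t%:R * \sum_(1 <= s < t.+1) \sum_(0 <= j < u.+1)
            kappa_lim kappa beta (th (s + k w)%N) j ^+ 2) @ \oo --> 0}.
Proof.
move=> hbeta u k hk.
have hT1 : natfilt y (1 - 1) setT by apply: natfilt_T.
have s2ge : 0 <= sigma2.
  have := D3 1 setT hT1; rewrite probability_setT mule1 => h.
  rewrite -lee_fin -h; apply: integral_ge0 => w _; rewrite lee_fin sqr_ge0 //.
have [s0|s0n] := eqVneq sigma2 0.
  apply: aeW => w; rewrite s0 /=.
  under eq_fun do rewrite !mul0r subrr.
  exact: cvg_cst.
have s2pos : 0 < sigma2 by rewrite lt_neqAle eq_sym s0n s2ge.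
have [K hK] := D4.
pose K' := `|K| + 1.
have K'0 : 0 < K' by rewrite /K' ltr_pwDr // normr_ge0.
have h2 : {ae P, forall w, forall n : nat,
    series (fun s => kappa s * eps (n%:Z - s%:Z) w) @ \oo --> y n%:Z w}.
  by apply: ae_foralln => n; exact: D2_ma.
have hae : {ae P, forall w, (forall t, `|eps t w| <= K') /\ (forall n : nat,
    series (fun s => kappa s * eps (n%:Z - s%:Z) w) @ \oo --> y n%:Z w)}.
  apply: (filterS2 _ _ hK h2) => w h1 h3; split => // t.
  apply: le_trans (h1 t) _; rewrite /K' (le_trans (ler_norm K)) // lerDl //.
have [N0 [mN0 PN0 sub]] := hae.
have good : forall w, ~ N0 w -> (forall t, `|eps t w| <= K') /\ (forall n : nat,
    series (fun s => kappa s * eps (n%:Z - s%:Z) w) @ \oo --> y n%:Z w).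
  by move=> w hw; apply: contrapT => hq; apply: hw; apply: sub.
have hN0 : forall w, ~ N0 w -> forall t, `|eps t w| <= K' by move=> w /good [].
have hser : forall w, ~ N0 w -> forall n : nat,
    series (fun s => kappa s * eps (n%:Z - s%:Z) w) @ \oo --> y n%:Z w.
  by move=> w /good [].
pose Lk := lim (series (fun s => `|kappa s|) @ \oo).
have hLk : series (fun s => `|kappa s|) @ \oo --> Lk := D2_sum.
have io := io_ae y_meas D2_k0 mds_adapted mds_int mds_0 D3 K'0 mN0 PN0 hN0 hser hLk s2pos.
have [ks [Ks [_ [_ [hKs hth]]]]] := Htheta.
have aN : {ae P, forall w, ~ N0 w}.
  by exists N0; split => // w /= /contrapT.
have a12 : {ae P, forall w, ~ N0 w /\ forall n : nat, exists i : nat,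
    cc sigma2 K' <= `|y (n + i)%:Z w|}.
  by apply: (filterS2 _ _ aN io) => w a b; split.
apply: (filterS2 _ _ a12 hth) => w [hw hio] hthw.
have Ks1 : Ks w < 1 by case/andP: (hKs w).
apply: (@point_main _ (fun n => y n%:Z w) beta sigma2 kappa u (k w) (K' * Lk) (cc sigma2 K') (ks w) (Ks w)) => //.

- by move=> n; exact: (y_bound hN0 hser hLk hw n).
- by rewrite /cc divr_gt0 // delta_gt0.
Qed.
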